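(* Let $n\geq 1$ and let $T$ be a complete $n$-ary theory. Then $T$ is stable if and only if every $T$-formula with $n$ free variables is stable.
   Context: A formula $\varphi(\bar{x},\bar{y})$ (with a given partition of its free variables into $\bar x$ and $\bar y$) of $T$ is stable if there are no tuples $\bar{a}_k,\bar{b}_k$, $k\in\omega$, in a model of $T$ with $\models\varphi(\bar{a}_i,\bar{b}_j)\Leftrightarrow i\leq j$. A formula is called stable if it is stable for every partition of its free variables; $T$ is stable if every $T$-formula is stable. For $n\geq 1$, a formula of $T$ is $n$-ary if it is $T$-equivalent to a Boolean combination of $T$-formulas each having at most $n$ free variables; $T$ is unary ($1$-ary) if every formula is $T$-equivalent to a Boolean combination of formulas with one free variable and formulas $x\approx y$, and for $n\geq 2$, $T$ is $n$-ary if every $T$-formula is $n$-ary. *)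

(* Defs.v *)
From mathcomp Require Import all_boot.
Set Implicit Arguments.
Unset Strict Implicit.
Unset Printing Implicit Defensive.

Record signature := Signature {
  fsym : Type; farity : fsym -> nat;
  rsym : Type; rarity : rsym -> nat }.

Section FOL.
Variable L : signature.

Inductive term : Type :=
| Var : nat -> term
| App : forall f : fsym L, ('I_(farity f) -> term) -> term.

Inductive formula : Type :=
| Fls : formula
| Eq : term -> term -> formula
| Rel : forall r : rsym L, ('I_(rarity r) -> term) -> formula
| Not : formula -> formula
| And : formula -> formula -> formula
| Or : formula -> formula -> formula
| Ex : nat -> formula -> formula
| All : nat -> formula -> formula.

Inductive occurs_term (v : nat) : term -> Prop :=
| occ_var : occurs_term v (Var v)
| occ_app : forall f ts (i : 'I_(farity f)), occurs_term v (ts i) -> occurs_term v (App ts).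

Inductive free_in (v : nat) : formula -> Prop :=
| fr_eql : forall t u, occurs_term v t -> free_in v (Eq t u)
| fr_eqr : forall t u, occurs_term v u -> free_in v (Eq t u)
| fr_rel : forall r ts (i : 'I_(rarity r)), occurs_term v (ts i) -> free_in v (Rel ts)
| fr_not : forall p, free_in v p -> free_in v (Not p)
| fr_andl : forall p q, free_in v p -> free_in v (And p q)
| fr_andr : forall p q, free_in v q -> free_in v (And p q)
| fr_orl : forall p q, free_in v p -> free_in v (Or p q)
| fr_orr : forall p q, free_in v q -> free_in v (Or p q)
| fr_ex : forall w p, w <> v -> free_in v p -> free_in v (Ex w p)
| fr_all : forall w p, w <> v -> free_in v p -> free_in v (All w p).

Definition has_free_vars (n : nat) (phi : formula) : Prop :=
  exists l : seq nat, uniq l /\ size l = n /\ (forall v, free_in v phi <-> v \in l).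

Definition has_at_most_free_vars (n : nat) (phi : formula) : Prop :=
  exists l : seq nat, size l <= n /\ (forall v, free_in v phi -> v \in l).

Definition sentence (phi : formula) : Prop := forall v, ~ free_in v phi.

Record structure := Structure {
  dom :> Type;
  dom_inh : dom;
  funs : forall f : fsym L, ('I_(farity f) -> dom) -> dom;
  rels : forall r : rsym L, ('I_(rarity r) -> dom) -> Prop }.

Fixpoint eval (M : structure) (s : nat -> M) (t : term) : M :=
  match t with
  | Var v => s v
  | App f ts => funs (fun i => eval s (ts i))
  end.

Definition upd (M : structure) (s : nat -> M) (v : nat) (d : M) : nat -> M :=
  fun w => if w == v then d else s w.

Fixpoint sat (M : structure) (s : nat -> M) (phi : formula) : Prop :=
  match phi with
  | Fls => False
  | Eq t u => eval s t = eval s u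
  | Rel r ts => rels (fun i => eval s (ts i))
  | Not p => ~ sat s p
  | And p q => sat s p /\ sat s q
  | Or p q => sat s p \/ sat s q
  | Ex v p => exists d : M, sat (upd s v d) p
  | All v p => forall d : M, sat (upd s v d) p
  end.

Definition theory := formula -> Prop.

Definition is_model (T : theory) (M : structure) : Prop :=
  forall phi, T phi -> forall s : nat -> M, sat s phi.

Definition entails (T : theory) (phi : formula) : Prop :=
  forall M : structure, is_model T M -> forall s : nat -> M, sat s phi.

Definition complete (T : theory) : Prop :=
  (forall phi, T phi -> sentence phi) /\
  (exists M : structure, is_model T M) /\
  (forall phi, sentence phi -> entails T phi \/ entails T (Not phi)).

Definition T_equiv (T : theory) (phi psi : formula) : Prop :=
  forall M : structure, is_model T M -> forall s : nat -> M, sat s phi <-> sat s psi.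

(* a partition of the variables into x-variables (P v = true) and
   y-variables (P v = false); tuples a_i, b_j are given as assignments *)
Definition mix (M : structure) (P : nat -> bool) (a b : nat -> M) : nat -> M :=
  fun v => if P v then a v else b v.

Definition stable_for (T : theory) (P : nat -> bool) (phi : formula) : Prop :=
  forall M : structure, is_model T M ->
  forall a b : nat -> nat -> M,
    ~ (forall i j : nat, sat (mix P (a i) (b j)) phi <-> i <= j).

Definition stable_formula (T : theory) (phi : formula) : Prop :=
  forall P : nat -> bool, stable_for T P phi.

Definition stable_theory (T : theory) : Prop :=
  forall phi, stable_formula T phi.

Inductive bool_comb (S : formula -> Prop) : formula -> Prop :=
| bc_atom : forall p, S p -> bool_comb S p
| bc_not : forall p, bool_comb S p -> bool_comb S (Not p)
| bc_and : forall p q, bool_comb S p -> bool_comb S q -> bool_comb S (And p q)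
| bc_or : forall p q, bool_comb S p -> bool_comb S q -> bool_comb S (Or p q).

(* building blocks: formulas with at most n free variables, and formulas
   x ≈ y (the latter are only needed for n = 1; for n >= 2 they already
   have at most n free variables) *)
Definition nary_atom (n : nat) (phi : formula) : Prop :=
  has_at_most_free_vars n phi \/ exists x y : nat, phi = Eq (Var x) (Var y).

Definition nary_formula (T : theory) (n : nat) (phi : formula) : Prop :=
  exists psi, bool_comb (nary_atom n) psi /\ T_equiv T phi psi.

Definition nary_theory (T : theory) (n : nat) : Prop :=
  forall phi, nary_formula T n phi.

End FOL.

(* Main.v *)
Require Import Defs.
From mathcomp Require Import all_boot.
From mathcomp Require Import zify.
From Stdlib Require Import Classical ClassicalEpsilon.

Set Implicit Arguments.
Unset Strict Implicit.
Unset Printing Implicit Defensive.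

Definition inf (A : nat -> Prop) := forall N, exists y, N <= y /\ A y.

Lemma inf_true : inf (fun _ => True).
Proof. by move=> N; exists N. Qed.

Section Ramsey.
Variable c : nat -> nat -> bool.

Lemma inf_step A : inf A -> exists p : nat * bool,
  A p.1 /\ inf (fun y => A y /\ p.1 < y /\ c p.1 y = p.2).
Proof.
move=> hA; case: (hA 0) => x [_ Ax].
case: (classic (inf (fun y => A y /\ x < y /\ c x y = true))) => H.
  by exists (x, true).
exists (x, false); split=> //= N.
have [M HM] : exists M, forall y, M <= y -> ~ (A y /\ x < y /\ c x y = true).
  apply: NNPP => H1; apply: H => M.
  apply: NNPP => H2; apply: H1; exists M => y hy h; apply: H2; exists y; done.
case: (hA (maxn N (maxn M x.+1))) => y [hy Ay].
have hN : N <= y by lia.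
have hM : M <= y by lia.
have hx : x < y by lia.
exists y; split=> //; split=> //; split=> //.
case E: (c x y) => //; exfalso; exact: (HM y hM (conj Ay (conj hx E))).
Qed.

Record st := St { stA : nat -> Prop; stI : inf stA }.

Definition nxt (s : st) : {p : nat * bool | stA s p.1 /\
   inf (fun y => stA s y /\ p.1 < y /\ c p.1 y = p.2)} :=
  constructive_indefinite_description _ (inf_step (stI s)).

Definition nst (s : st) : st := @St _ (proj2 (proj2_sig (nxt s))).

Fixpoint seqst k := match k with 0 => @St _ inf_true | k'.+1 => nst (seqst k') end.

Definition xs k := (proj1_sig (nxt (seqst k))).1.
Definition bs k := (proj1_sig (nxt (seqst k))).2.

Lemma A_succ k y : stA (seqst k.+1) y ->
  stA (seqst k) y /\ xs k < y /\ c (xs k) y = bs k.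
Proof. by []. Qed.

Lemma A_mono k m y : k <= m -> stA (seqst m) y -> stA (seqst k) y.
Proof.
elim: m => [|m IH]; first by rewrite leqn0 => /eqP ->.
rewrite leq_eqVlt => /orP [/eqP -> // | hk] h.
apply: IH => //; exact: (proj1 (A_succ h)).
Qed.

Lemma xs_in k : stA (seqst k) (xs k).
Proof. exact: (proj1 (proj2_sig (nxt (seqst k)))). Qed.

Lemma xs_prop k m : k < m -> xs k < xs m /\ c (xs k) (xs m) = bs k.
Proof.
move=> hkm; have := A_mono hkm (xs_in m) => /A_succ [_ h]; exact h.
Qed.

Lemma ramsey : exists h : nat -> nat, exists b,
  forall i j, i < j -> h i < h j /\ c (h i) (h j) = b.
Proof.
have [b hb] : exists b, inf (fun k => bs k = b).
  case: (classic (inf (fun k => bs k = true))) => H; first by exists true.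
  exists false.
  have [M HM] : exists M, forall y, M <= y -> ~ (bs y = true).
    apply: NNPP => H1; apply: H => M.
    apply: NNPP => H2; apply: H1; exists M => y hy h; apply: H2; exists y; done.
  move=> N; exists (maxn N M); split; first lia.
  have := HM (maxn N M); case: (bs _) => //; move=> h; exfalso; apply: h => //; lia.
pose nx N := proj1_sig (constructive_indefinite_description _ (hb N)).
have nxP N : N <= nx N /\ bs (nx N) = b.
  exact: (proj2_sig (constructive_indefinite_description _ (hb N))).
pose e := fix e m := match m with 0 => nx 0 | m'.+1 => nx (e m').+1 end.
have eS m : e m < e m.+1 by exact: (proj1 (nxP (e m).+1)).
have einc : forall i j, i < j -> e i < e j.
  move=> i j; elim: j => [//|j IH].
  rewrite ltnS leq_eqVlt => /orP [/eqP -> // | h].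
  exact: ltn_trans (IH h) (eS j).
exists (fun m => xs (e m)), b => i j hij.
have [h1 h2] := xs_prop (einc _ _ hij); split => //.
rewrite h2; clear h1 h2 hij.
case: i => [|i]; [exact: (proj2 (nxP 0)) | exact: (proj2 (nxP _))].
Qed.

End Ramsey.

Definition ladder (R : nat -> nat -> Prop) := forall i j : nat, R i j <-> i <= j.

Lemma dec_b (P : Prop) : bool.
Proof. exact: (if excluded_middle_informative P then true else false). Qed.

Definition bP (P : Prop) : bool := if excluded_middle_informative P then true else false.

Lemma bPE (P : Prop) : bP P = true <-> P.
Proof. rewrite /bP; case: excluded_middle_informative => //. Qed.

Lemma arith2 i j : (i <= j -> 2 * i < 2 * j + 1) /\ (j < i -> 2 * j + 1 < 2 * i).
Proof. split; lia. Qed.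

Lemma sub_and (R1 R2 : nat -> nat -> Prop) :
  ladder (fun i j => R1 i j /\ R2 i j) ->
  exists f g : nat -> nat,
    ladder (fun i j => R1 (f i) (g j)) \/ ladder (fun i j => R2 (f i) (g j)).
Proof.
move=> H.
have [h [b hh]] := ramsey (fun x y => bP (R1 y x)).
exists (fun i => h (2 * i)), (fun j => h (2 * j + 1)).
have Hle i j : i <= j -> R1 (h (2 * i)) (h (2 * j + 1)) /\ R2 (h (2 * i)) (h (2 * j + 1)).
  move=> hij; apply/H; have [hl _] := hh _ _ (proj1 (arith2 i j) hij); exact: ltnW.
have Hgt i j : j < i -> ~ (R1 (h (2 * i)) (h (2 * j + 1)) /\ R2 (h (2 * i)) (h (2 * j + 1)))
  /\ bP (R1 (h (2 * i)) (h (2 * j + 1))) = b.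
  move=> hij; have [hl hc] := hh _ _ (proj2 (arith2 i j) hij); split => //.
  move/H; rewrite leqNgt hl //.
case: b hh Hgt => hh Hgt.
- right => i j; case: (leqP i j) => hij; first by split => // _; exact: (proj2 (Hle _ _ hij)).
  split => // h2; have [hn hb] := Hgt _ _ hij; exfalso; apply: hn; split => //.
  exact/bPE.
- left => i j; case: (leqP i j) => hij; first by split => // _; exact: (proj1 (Hle _ _ hij)).
  split => // h1; have [hn hb] := Hgt _ _ hij.
  by move/bPE: h1; rewrite hb.
Qed.

Lemma sub_or (R1 R2 : nat -> nat -> Prop) :
  ladder (fun i j => R1 i j \/ R2 i j) ->
  exists f g : nat -> nat,
    ladder (fun i j => R1 (f i) (g j)) \/ ladder (fun i j => R2 (f i) (g j)).
Proof.
move=> H.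
have [h [b hh]] := ramsey (fun x y => bP (R1 x y)).
exists (fun i => h (2 * i)), (fun j => h (2 * j + 1)).
have Hle i j : i <= j -> (R1 (h (2 * i)) (h (2 * j + 1)) \/ R2 (h (2 * i)) (h (2 * j + 1)))
  /\ bP (R1 (h (2 * i)) (h (2 * j + 1))) = b.
  move=> hij; have [hl hc] := hh _ _ (proj1 (arith2 i j) hij); split => //.
  apply/H; exact: ltnW.
have Hgt i j : j < i -> ~ (R1 (h (2 * i)) (h (2 * j + 1)) \/ R2 (h (2 * i)) (h (2 * j + 1))).
  move=> hij; have [hl _] := hh _ _ (proj2 (arith2 i j) hij).
  move/H; rewrite leqNgt hl //.
case: b hh Hle => hh Hle.
- left => i j; case: (leqP i j) => hij.
    split => // _; have [_ hb] := Hle _ _ hij; exact/bPE.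
  split => // h1; exfalso; apply: (Hgt _ _ hij); by left.
- right => i j; case: (leqP i j) => hij.
    split => // _; have [[h1|h2] hb] := Hle _ _ hij => //.
    by move/bPE: h1; rewrite hb.
  split => // h1; exfalso; apply: (Hgt _ _ hij); by right.
Qed.

Lemma no_ladder_i (Q : nat -> Prop) : ~ (forall i j : nat, Q i <-> i <= j).
Proof. by move=> H; have := proj1 (H 1 0) (proj2 (H 1 1) isT). Qed.

Lemma no_ladder_j (Q : nat -> Prop) : ~ (forall i j : nat, Q j <-> i <= j).
Proof. by move=> H; have := proj1 (H 1 0) (proj2 (H 0 0) isT). Qed.

Lemma mixed_eq (M : Type) (u v : nat -> M) : ~ (forall i j, u i = v j <-> i <= j).
Proof.
move=> H.
have e00 := proj2 (H 0 0) isT. have e01 := proj2 (H 0 1) isT.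
have e11 := proj2 (H 1 1) isT.
have : u 1 = v 0 by rewrite e11 -e01 e00.
by move/(H 1 0).
Qed.

Lemma mixed_neq (M : Type) (u v : nat -> M) : ~ (forall i j, u i <> v j <-> i <= j).
Proof.
move=> H.
have e10 : u 1 = v 0 by apply: NNPP => h; have := proj1 (H 1 0) h.
have e20 : u 2 = v 0 by apply: NNPP => h; have := proj1 (H 2 0) h.
have e21 : u 2 = v 1 by apply: NNPP => h; have := proj1 (H 2 1) h.
apply: (proj2 (H 1 1) isT); by rewrite e10 -e20 e21.
Qed.

Section Main.
Variable L : signature.
Variable T : theory L.

Lemma stable_ext P (phi psi : formula L) :
  (forall M : structure L, is_model T M -> forall s : nat -> M, sat s phi <-> sat s psi) ->
  stable_for T P psi -> stable_for T P phi.
Proof.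
move=> E H M HM a b Hl; apply: (H M HM a b) => i j; rewrite -Hl; split; apply E => //.
Qed.

Lemma stable_and_gen P (phi p q : formula L) :
  (forall M : structure L, is_model T M -> forall s : nat -> M,
     sat s phi <-> sat s p /\ sat s q) ->
  stable_for T P p -> stable_for T P q -> stable_for T P phi.
Proof.
move=> E Hp Hq M HM a b Hl.
have Hl' : ladder (fun i j => sat (mix P (a i) (b j)) p /\ sat (mix P (a i) (b j)) q).
  by move=> i j; rewrite -Hl E.
have [f [g [H1|H2]]] := sub_and Hl'.
- exact: (Hp M HM (fun i => a (f i)) (fun j => b (g j))).
- exact: (Hq M HM (fun i => a (f i)) (fun j => b (g j))).
Qed.

Lemma stable_or_gen P (phi p q : formula L) :
  (forall M : structure L, is_model T M -> forall s : nat -> M,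
     sat s phi <-> sat s p \/ sat s q) ->
  stable_for T P p -> stable_for T P q -> stable_for T P phi.
Proof.
move=> E Hp Hq M HM a b Hl.
have Hl' : ladder (fun i j => sat (mix P (a i) (b j)) p \/ sat (mix P (a i) (b j)) q).
  by move=> i j; rewrite -Hl E.
have [f [g [H1|H2]]] := sub_or Hl'.
- exact: (Hp M HM (fun i => a (f i)) (fun j => b (g j))).
- exact: (Hq M HM (fun i => a (f i)) (fun j => b (g j))).
Qed.

Lemma eq_atom_stable P x y :
  stable_for T P (Eq (Var L x) (Var L y)) /\ stable_for T P (Not (Eq (Var L x) (Var L y))).
Proof.
split => M HM a b; rewrite /mix /=; case: (P x); case: (P y) => H.
- exact: (@no_ladder_i (fun i => a i x = a i y)).
- exact: (@mixed_eq M (fun i => a i x) (fun j => b j y)).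
- apply: (@mixed_eq M (fun i => a i y) (fun j => b j x)) => i j; rewrite -H.
  by split => e; rewrite e.
- exact: (@no_ladder_j (fun j => b j x = b j y)).
- exact: (@no_ladder_i (fun i => a i x <> a i y)).
- exact: (@mixed_neq M (fun i => a i x) (fun j => b j y)).
- apply: (@mixed_neq M (fun i => a i y) (fun j => b j x)) => i j; rewrite -H.
  by split => e f; apply: e; rewrite f.
- exact: (@no_ladder_j (fun j => b j x <> b j y)).
Qed.

Fixpoint pad (phi : formula L) (Z : seq nat) : formula L :=
  match Z with
  | [::] => phi
  | z :: Z' => And (pad phi Z') (Eq (Var L z) (Var L z))
  end.

Lemma occ_var_iff v z : occurs_term v (Var L z) <-> v = z.
Proof. split; [by inversion 1 | move=> ->; constructor]. Qed.

Lemma pad_free phi Z v : free_in v (pad phi Z) <-> free_in v phi \/ v \in Z.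
Proof.
elim: Z => [|z Z IH] /=; first by split; [left | case].
rewrite in_cons; split.
- move=> H; inversion H; subst.
  + case/IH: H1 => [h|h]; [by left | by right; rewrite h orbT].
  + inversion H1; subst; [move/occ_var_iff: H2 => -> | move/occ_var_iff: H2 => ->];
    by right; rewrite eqxx.
- case=> [h|/orP [/eqP -> | h]].
  + apply: fr_andl; apply/IH; by left.
  + apply: fr_andr; apply: fr_eql; constructor.
  + apply: fr_andl; apply/IH; by right.
Qed.

Lemma pad_sat phi Z (M : structure L) (s : nat -> M) : sat s (pad phi Z) <-> sat s phi.
Proof. elim: Z => [|z Z IH] //=; rewrite IH; tauto. Qed.

Lemma filt (Q : nat -> Prop) (l : seq nat) :
  exists F, uniq F /\ size F <= size l /\ forall v, v \in F <-> v \in l /\ Q v.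
Proof.
elim: l => [|a l [F [uF [sF hF]]]].
  by exists [::]; split => //; split => // v; split => [|[]].
case: (classic (Q a /\ a \notin F)) => [[qa na]|nq].
- exists (a :: F); split; first by rewrite /= na uF.
  split; first by rewrite /= ltnS.
  move=> v; rewrite !in_cons; split.
  + by case/orP => [/eqP -> | /hF [h1 h2]]; [rewrite eqxx | rewrite h1 orbT].
  + case=> /orP [/eqP -> | h1] h2; first by rewrite eqxx.
    by rewrite (proj2 (hF v) (conj h1 h2)) orbT.
- exists F; split => //; split; first by rewrite /= (leq_trans sF).
  move=> v; rewrite in_cons; split.
  + by case/hF => h1 h2; rewrite h1 orbT.
  + case=> /orP [/eqP -> | h1] h2.
    * apply: NNPP => h; apply: nq; split => //; by apply/negP.
    * exact/hF.
Qed.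

Lemma sumn_ge (F : seq nat) v : v \in F -> v <= sumn F.
Proof.
elim: F => //= x F IH; rewrite in_cons => /orP [/eqP -> | /IH h].
- exact: leq_addr.
- exact: leq_trans h (leq_addl _ _).
Qed.

Lemma atmost_stable n :
  (forall phi : formula L, has_free_vars n phi -> stable_formula T phi) ->
  forall phi, has_at_most_free_vars n phi -> stable_formula T phi.
Proof.
move=> H phi [l [hl hfree]].
have [F [uF [sF hF]]] := filt (fun v => free_in v phi) l.
have hFv v : free_in v phi <-> v \in F.
  split; [move=> h; apply/hF; split => //; exact: hfree | by case/hF].
pose Z := iota (sumn F).+1 (n - size F).
have Hs : stable_formula T (pad phi Z).
  apply: H; exists (F ++ Z); split; last split.
  - rewrite cat_uniq uF iota_uniq andbT /=; apply/hasPn => v vZ.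
    rewrite mem_iota in vZ; apply/negP => vF; have := sumn_ge vF; lia.
  - rewrite size_cat size_iota; have : size F <= n by exact: leq_trans sF hl.
    by move=> h; rewrite subnKC.
  - move=> v; rewrite pad_free mem_cat hFv; split.
    + by case=> h; rewrite h ?orbT.
    + by case/orP; [left | right].
move=> P; apply: (stable_ext (psi := pad phi Z)) => // M _ s.
by rewrite pad_sat.
Qed.

Lemma atmost_not n (p : formula L) :
  has_at_most_free_vars n p -> has_at_most_free_vars n (Not p).
Proof.
case=> l [hl hf]; exists l; split => // v h; apply: hf; by inversion h.
Qed.

End Main.

Theorem theorem1p14 (L : signature) (n : nat) (T : theory L) :
  1 <= n -> complete T -> nary_theory T n ->
  (stable_theory T <-> forall phi : formula L, has_free_vars n phi -> stable_formula T phi).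
Proof.
move=> _ _ Hn; split; first by move=> H phi _; exact: H.
move=> H phi P.
have [psi [Hb He]] := Hn phi.
apply: (stable_ext (psi := psi)); first by move=> M HM s; exact: He.
suff : (forall P, stable_for T P psi) /\ (forall P, stable_for T P (Not psi)).
  by case=> h _; exact: h.
elim: Hb {He} => {psi} [p Hp | p _ [IH1 IH2] | p q _ [IHp1 IHp2] _ [IHq1 IHq2]
                        | p q _ [IHp1 IHp2] _ [IHq1 IHq2]].
- case: Hp => [Ha | [x [y ->]]].
  + split; [exact: atmost_stable H _ Ha | exact: atmost_stable H _ (atmost_not Ha)].
  + split => P'; [exact: (proj1 (eq_atom_stable T P' x y)) | exact: (proj2 (eq_atom_stable T P' x y))].
- split => // P'; apply: (stable_ext (psi := p)) => // M _ s /=; split; [exact: NNPP | tauto].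
- split => P'.
  + by apply: (stable_and_gen (p := p) (q := q)).
  + apply: (stable_or_gen (p := Not p) (q := Not q)) => // M _ s /=.
    split; [move=> h; apply: NNPP => h'; apply: h; split; apply: NNPP; tauto | tauto].
- split => P'.
  + by apply: (stable_or_gen (p := p) (q := q)).
  + apply: (stable_and_gen (p := Not p) (q := Not q)) => // M _ s /=; tauto.
Qed.
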